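(* For any $n\ge0$, $\mathsf{R}\subseteq[n]$ and $r\in\mathcal{Y}_n$, $\gamma(r)|_{\mathsf{R}}=\gamma(r|_{\mathsf{R}})$.
   Context: Permutations in one-line notation; $\mathrm{st}(a_1,..,a_p)$ is the permutation with the same relative order as distinct integers $a_i$; $\mathrm{id}_0$ is the empty permutation. For $\sigma\in\mathfrak{S}_p,\tau\in\mathfrak{S}_q$, $\sigma\vee\tau=(\sigma(1)+q,..,\sigma(p)+q,p+q+1,\tau(1),..,\tau(q))$. Trees: $\mathcal{Y}_n$ = rooted planar binary trees with $n$ internal nodes, $\mathcal{Y}_0=\{|\}$; $s\vee t$ = root with left subtree $s$, right subtree $t$; each $t\neq|$ is uniquely $t_l\vee t_r$. $\lambda(\mathrm{id}_0)=|$, $\lambda(\sigma)=\lambda(\mathrm{st}(\sigma(1..j-1)))\vee\lambda(\mathrm{st}(\sigma(j+1..n)))$ where $j=\sigma^{-1}(n)$; $\gamma(|)=\mathrm{id}_0$, $\gamma(t)=\gamma(t_l)\vee\gamma(t_r)$. For $\mathsf{R}=\{R_1<\dots<R_p\}\subseteq[n]$ and $\rho\in\mathfrak{S}_n$, $\rho|_{\mathsf{R}}=\mathrm{st}(\rho(R_1),\dots,\rho(R_p))$; for $r\in\mathcal{Y}_n$, $r|_{\mathsf{R}}=\lambda(\gamma(r)|_{\mathsf{R}})$. *)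

(* Defs.v *)
From mathcomp Require Import all_boot.
Set Implicit Arguments. Unset Strict Implicit. Unset Printing Implicit Defensive.

(* Permutations in one-line notation: a permutation of [n] is the seq
   [:: s(1); ...; s(n)] of nats (values in 1..n). *)

Definition st (s : seq nat) : seq nat :=
  [seq (count (fun y => y < x) s).+1 | x <- s].

Definition pvee (s t : seq nat) : seq nat :=
  let p := size s in let q := size t in
  [seq x + q | x <- s] ++ (p + q).+1 :: t.

Inductive tree := Leaf | Node of tree & tree.

(* number of internal nodes; Y_n = trees with nnodes t = n *)
Fixpoint nnodes (t : tree) : nat :=
  match t with Leaf => 0 | Node l r => (nnodes l + nnodes r).+1 end.

Fixpoint gamma (t : tree) : seq nat :=
  match t with Leaf => [::] | Node l r => pvee (gamma l) (gamma r) end.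

(* lambda, by recursion on the length (fuel); for a permutation sigma of [n],
   the maximum entry is n and its position is sigma^{-1}(n). *)
Fixpoint lambda_rec (fuel : nat) (s : seq nat) : tree :=
  match fuel with
  | 0 => Leaf
  | f.+1 =>
    match s with
    | [::] => Leaf
    | _ :: _ =>
      let j := index (foldr maxn 0 s) s in
      Node (lambda_rec f (st (take j s))) (lambda_rec f (st (drop j.+1 s)))
    end
  end.

Definition lambda (s : seq nat) : tree := lambda_rec (size s) s.

(* restriction of rho in S_n to R ⊆ [n]; R is given as a set of 0-based
   positions i : 'I_n (standing for i+1 ∈ [n]), taken in increasing order. *)
Definition prestr (n : nat) (R : {set 'I_n}) (rho : seq nat) : seq nat :=
  st [seq nth 0 rho (val i) | i <- enum 'I_n & i \in R].

Definition trestr (n : nat) (R : {set 'I_n}) (r : tree) : tree :=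
  lambda (prestr R (gamma r)).

(* Main.v *)
Require Import Defs.
From mathcomp Require Import all_boot.
From mathcomp Require Import zify.

Definition avoid132 (s : seq nat) : Prop :=
  forall a b c, subseq [:: a; b; c] s -> ~ (a < c < b).

Lemma avoid_sub s t : avoid132 s -> subseq t s -> avoid132 t.
Proof. move=> H st a b c abc; apply: H; exact: subseq_trans abc st. Qed.

Lemma avoid_map s f : avoid132 s ->
  (forall x y, x \in s -> y \in s -> f x < f y -> x < y) -> avoid132 (map f s).
Proof.
move=> H Hf a b c /subseqP [m _ Hm]; rewrite -map_mask in Hm.
have Hsub := mask_subseq m s.
move: Hm Hsub; case: (mask m s) => [|a' [|b' [|c' [|]]]] //= [-> -> ->] Hsub.
have Ha : a' \in s by apply: (mem_subseq Hsub); rewrite inE eqxx.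
have Hb : b' \in s by apply: (mem_subseq Hsub); rewrite !inE eqxx orbT.
have Hc : c' \in s by apply: (mem_subseq Hsub); rewrite !inE eqxx !orbT.
move=> /andP [h1 h2]; apply: (H a' b' c' Hsub).
by rewrite (Hf _ _ Ha Hc h1) (Hf _ _ Hc Hb h2).
Qed.

Lemma subseq_catP (x u v : seq nat) : subseq x (u ++ v) ->
  exists x1 x2, [/\ x = x1 ++ x2, subseq x1 u & subseq x2 v].
Proof.
move=> /subseqP [m Hs ->].
rewrite -(cat_take_drop (size u) m) mask_cat; last by rewrite size_takel // Hs size_cat leq_addr.
by exists (mask (take (size u) m) u), (mask (drop (size u) m) v); split => //; apply: mask_subseq.
Qed.

Definition mono_on (t : seq nat) (f : nat -> nat) :=
  forall x y, x \in t -> y \in t -> (f x < f y) = (x < y).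

Lemma count_strict (s : seq nat) x y : x \in s -> x < y ->
  count (fun z => z < x) s < count (fun z => z < y) s.
Proof.
elim: s => //= z s IH; rewrite inE => /orP [/eqP <-|xs] xy.
  rewrite ltnn xy /= add0n add1n ltnS; apply: sub_count => w /= h; lia.
have := IH xs xy; case: (ltnP z x) => h1; case: (ltnP z y) => h2 /=; lia.

Qed.

Lemma st_mono t : mono_on t (fun x => (count (fun z => z < x) t).+1).
Proof.
move=> x y xt yt; rewrite ltnS; apply/idP/idP.
  move=> h; rewrite ltnNge; apply/negP => yx.
  have : count (fun z => z < y) t <= count (fun z => z < x) t.
    by apply: sub_count => w /= h'; lia.
  lia.
by move=> xy; apply: count_strict.
Qed.

Lemma st_map t f : mono_on t f -> st (map f t) = st t.
Proof.
move=> Hf; rewrite /st -map_comp; apply/eq_in_map => x xt /=.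
rewrite count_map; congr S; apply: eq_in_count => w wt /=; exact: Hf.
Qed.

Lemma st_idem t : st (st t) = st t.
Proof. exact: (@st_map t _ (st_mono t)). Qed.

Lemma st_uniq t : uniq t -> uniq (st t).
Proof.
move=> ut; rewrite /st map_inj_in_uniq // => x y xt yt /= e.
case: (ltngtP x y) => // h.
  by have := st_mono t x y xt yt; rewrite h e ltnn.
by have := st_mono t y x yt xt; rewrite h e ltnn.
Qed.

Lemma st_avoid t : avoid132 t -> avoid132 (st t).
Proof.
move=> H; apply: avoid_map => // x y xt yt; by rewrite (st_mono t x y xt yt).
Qed.

Lemma map_fix (f : nat -> nat) s : map f s = s -> forall x, x \in s -> f x = x.
Proof.
elim: s => //= z s IH [e1 e2] x; rewrite inE => /orP [/eqP ->|]; first by [].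
exact: IH.
Qed.

Lemma st_val s x : st s = s -> x \in s -> (count (fun y => y < x) s).+1 = x.
Proof. rewrite /st => /map_fix; apply. Qed.
Arguments st_val {s x}.

Lemma st_range s x : st s = s -> x \in s -> 0 < x <= size s.
Proof.
move=> H xs; rewrite -(st_val H xs) /= -(count_predC (fun y => y < x) s) -addn1 leq_add2l.
by rewrite -has_count; apply/hasP; exists x => //=; rewrite ltnn.
Qed.
Arguments st_range {s x}.

Lemma st_fixI s : (forall x, x \in s -> (count (fun y => y < x) s).+1 = x) -> st s = s.
Proof. move=> H; rewrite /st; exact: map_id_in. Qed.

Lemma foldr_max_ge s x : x \in s -> x <= foldr maxn 0 s.
Proof.
elim: s => //= z s IH; rewrite inE => /orP [/eqP ->|xs]; first exact: leq_maxl.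
exact: leq_trans (IH xs) (leq_maxr _ _).
Qed.

Lemma foldr_max_in s : s != [::] -> foldr maxn 0 s \in s.
Proof.
elim: s => // z s IH _.
have -> : foldr maxn 0 (z :: s) = maxn z (foldr maxn 0 s) by [].
case: (eqVneq s [::]) => [->|ns]; first by rewrite /= maxn0 inE.
have HM := IH ns.
case: (leqP z (foldr maxn 0 s)) => h.
  by rewrite inE HM orbT.
by rewrite inE eqxx.
Qed.

Definition good (s : seq nat) := [/\ uniq s, st s = s & avoid132 s].

Lemma mem_sub (l s : seq nat) x : subseq l s -> x \in l -> x \in s.
Proof. by move=> h; apply: mem_subseq. Qed.
Arguments mem_sub {l s x}.

Lemma pvee_good a b : good a -> good b -> good (pvee a b).
Proof.
move=> [ua sa aa] [ub sb ab].
rewrite /pvee; have [k kE] : {k | size b = k} by exists (size b).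
have [p pE] : {p | size a = p} by exists (size a).
rewrite kE pE; set U := map _ a.
have HU : forall x, x \in U -> k < x <= p + k.
  move=> x /mapP [y ya ->]; have := st_range sa ya; rewrite pE; lia.
have Hb : forall x, x \in b -> 0 < x <= k.
  move=> x xb; have := st_range sb xb; rewrite kE; lia.
split.
- rewrite cat_uniq /= ub andbT; apply/and3P; split.
  + rewrite map_inj_in_uniq // => x y _ _ /= ; lia.
  + rewrite negb_or; apply/andP; split.
      by apply/negP => mU; have := HU _ mU; lia.
    apply/hasPn => x xb /=; apply/negP => xU.
    by have := HU _ xU; have := Hb _ xb; lia.
  + apply/negP => mb; have := Hb _ mb; lia.
- apply: st_fixI => x; rewrite mem_cat inE => /orP [xU|/orP [/eqP ->|xb]];
    rewrite count_cat /=.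
  + have := HU _ xU; move: xU => /mapP [y ya ->] hy.
    have e1 : count (fun z => z < y + k) U = count (fun z => z < y) a.
      by rewrite count_map; apply: eq_count => w /=; rewrite ltn_add2r.
    have e2 : count (fun z => z < y + k) b = k.
      rewrite -[in RHS]kE -[in RHS](count_predT b); apply: eq_in_count => w wb.
      suff h : w < y + k by rewrite h.
      have := Hb _ wb; have := st_range sa ya; rewrite pE; lia.
    have := st_val sa ya; rewrite e1 e2; lia.
  + have e1 : count (fun z => z < (p + k).+1) U = p.
      rewrite -[in RHS]pE -[in RHS](size_map (fun x => x + k) a) -/U -[in RHS](count_predT U).
      apply: eq_in_count => w wU; suff h : w < (p + k).+1 by rewrite h.
      have := HU _ wU; lia.
    have e2 : count (fun z => z < (p + k).+1) b = k.
      rewrite -[in RHS]kE -[in RHS](count_predT b); apply: eq_in_count => w wb.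
      suff h : w < (p + k).+1 by rewrite h.
      have := Hb _ wb; lia.
    rewrite e1 e2; lia.
  + have e1 : count (fun z => z < x) U = 0.
      rewrite -(count_pred0 U); apply: eq_in_count => w wU /=.
      have := Hb _ xb; have := HU _ wU; lia.
    have := st_val sb xb; have := Hb _ xb; rewrite e1; lia.
- move=> x y z /subseq_catP [x1 [x2 [e s1 s2]]].
  have aU : avoid132 U.
    by apply: avoid_map => // u v _ _ /=; lia.
  case: x1 e s1 => [|x1a [|x1b [|x1c [|]]]] //= e s1.
  + subst x2; move: s2 => /=; case: eqP => [xm|_] s2.
      have zb : z \in b by apply: (mem_sub s2); rewrite !inE eqxx orbT.
      have := Hb _ zb; lia.
    exact: ab s2.
  + case: e => e1 e; subst x1a x2.
    have xU : x \in U by apply: (mem_sub s1); rewrite mem_head.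
    have yb : y \in (p + k).+1 :: b by apply: (mem_sub s2); rewrite !inE eqxx.
    have zb : z \in (p + k).+1 :: b by apply: (mem_sub s2); rewrite !inE eqxx orbT.
    move: yb zb; rewrite !inE => /orP [/eqP yb|yb] /orP [/eqP zb|zb];
      have := HU _ xU; try have := Hb _ yb; try have := Hb _ zb; lia.
  + case: e => e1 e3 e; subst x1a x1b x2.
    have xU : x \in U by apply: (mem_sub s1); rewrite mem_head.
    have yU : y \in U by apply: (mem_sub s1); rewrite !inE eqxx orbT.
    have zb : z \in (p + k).+1 :: b by apply: (mem_sub s2); rewrite !inE eqxx.
    move: zb; rewrite !inE => /orP [/eqP zb|zb];
      have := HU _ xU; have := HU _ yU; try have := Hb _ zb; lia.
  + case: e => e1 e3 e4 _; subst x1a x1b x1c; exact: aU s1.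
Qed.

Lemma gamma_good r : size (gamma r) = nnodes r /\ good (gamma r).
Proof.
elim: r => [|l [sl gl] r [sr gr]] /=.
  by split => //; split => // a b c.
split; first by rewrite /pvee size_cat size_map /= sl sr; lia.
exact: pvee_good.
Qed.

Lemma lam_good f s : size s <= f -> good s -> gamma (lambda_rec f s) = s.
Proof.
elim: f s => [|f IH] s hs [us ss as_].
  by case: s hs {us ss as_}.
have [->|ns] := eqVneq s [::]; first by [].
have -> : lambda_rec f.+1 s =
  Node (lambda_rec f (st (take (index (foldr maxn 0 s) s) s)))
       (lambda_rec f (st (drop (index (foldr maxn 0 s) s).+1 s))).
  by case: s ns {hs us ss as_}.
move: (foldr_max_in s ns) (@foldr_max_ge s).
move Em: (foldr maxn 0 s) => m mS le.
move Ej: (index m s) => j.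
have jlt : j < size s by rewrite -Ej index_mem.
have Hs : s = take j s ++ m :: drop j.+1 s.
  by rewrite -[in m :: _](nth_index 0 mS) Ej -(drop_nth 0 jlt) cat_take_drop.
move: (take j s) (drop j.+1 s) Hs => A B Hs.
rewrite Hs in us ss as_ le hs *; clear Hs Em Ej mS jlt ns.
have sv := st_val ss.
move: us; rewrite cat_uniq /= => /and4P [uA] /norP [mA dAB] mB uB.
have inA y : y \in A -> y \in A ++ m :: B by rewrite mem_cat => ->.
have inB y : y \in B -> y \in A ++ m :: B by rewrite mem_cat inE => ->; rewrite !orbT.
have ltA y : y \in A -> y < m.
  move=> yA; rewrite ltn_neqAle le ?inA // andbT; apply/eqP => e.
  by move: mA; rewrite -e yA.
have ltB y : y \in B -> y < m.
  move=> yB; rewrite ltn_neqAle le ?inB // andbT; apply/eqP => e.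
  by move: mB; rewrite -e yB.
have AB a b : a \in A -> b \in B -> b < a.
  move=> aA bB; case: (ltngtP b a) => // h.
    exfalso; apply: (as_ a m b).
      rewrite -[[:: a; m; b]]/([:: a] ++ [:: m; b]); apply: cat_subseq.
        by rewrite sub1seq.
      by rewrite /= eqxx sub1seq.
    by rewrite h ltB.
  by move: dAB => /hasPn /(_ _ bB); rewrite h aA.
have eB b : b \in B -> (count (fun y => y < b) B).+1 = b.
  move=> bB; rewrite -[RHS](sv b (inB _ bB)) count_cat /=.
  have -> : count (fun y => y < b) A = 0.
    rewrite -(count_pred0 A); apply: eq_in_count => a aA.
    move: (AB _ _ aA bB) => h; have -> : (a < b) = false by apply/negbTE; rewrite -leqNgt ltnW.
    by [].
  have -> : (m < b) = false by apply/negbTE; rewrite -leqNgt ltnW // ltB.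
  by [].
have eA a : a \in A -> (count (fun y => y < a) A).+1 + size B = a.
  move=> aA; rewrite -[RHS](sv a (inA _ aA)) count_cat /=.
  have -> : count (fun y => y < a) B = size B.
    rewrite -[in RHS](count_predT B); apply: eq_in_count => b bB.
    by rewrite (AB _ _ aA bB).
  have -> : (m < a) = false by apply/negbTE; rewrite -leqNgt ltnW // ltA.
  rewrite add0n; lia.
have eM : (size A + size B).+1 = m.
  rewrite -[RHS](sv m); last by rewrite mem_cat mem_head orbT.
  rewrite count_cat /= ltnn.
  have -> : count (fun y => y < m) A = size A.
    rewrite -[in RHS](count_predT A); apply: eq_in_count => a aA.
    by rewrite (ltA _ aA).
  have -> : count (fun y => y < m) B = size B.
    rewrite -[in RHS](count_predT B); apply: eq_in_count => b bB.
    by rewrite (ltB _ bB).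
  by [].
have stB : st B = B by apply: st_fixI.
have stA : map (fun x => x + size B) (st A) = A.
  rewrite /st -map_comp; apply: map_id_in => a aA /=; exact: eA.
have subA : subseq A (A ++ m :: B) by apply: prefix_subseq.
have subB : subseq B (A ++ m :: B).
  apply: subseq_trans (suffix_subseq A (m :: B)); exact: subseq_cons.
move: hs; rewrite size_cat /= => hs.
rewrite /= IH; first last.
- split; [exact: st_uniq | exact: st_idem | apply: st_avoid; exact: avoid_sub subA].
- by rewrite size_map; lia.
rewrite IH; first last.
- rewrite stB; split => //; exact: avoid_sub subB.
- by rewrite size_map; lia.
by rewrite /pvee stB stA size_map eM.
Qed.

Theorem lemma8p5 (n : nat) (R : {set 'I_n}) (r : tree) :
  nnodes r = n -> prestr R (gamma r) = gamma (trestr R r).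
Proof.
move=> hn; have [sz [ug sg ag]] := gamma_good r.
rewrite /trestr /lambda /prestr; set t := (X in st X).
have sub : subseq t (gamma r).
  rewrite /t -{2}(mkseq_nth 0 (gamma r)) /mkseq sz hn -val_enum_ord.
  rewrite (map_comp (nth 0 (gamma r)) val). apply: map_subseq.
  apply: map_subseq; exact: filter_subseq.
rewrite lam_good //; split.
- apply: st_uniq; exact: subseq_uniq sub ug.
- exact: st_idem.
- apply: st_avoid; exact: avoid_sub sub.
Qed.
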